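(* There exists a function $\mathrm{B}:2^{<\omega}\times 2^{<\omega}\to\mathbb{N}$ such that: (1) $\mathrm{B}(x|y)$ is upper semi-computable uniformly in $x,y$; (2) there is a constant $c$ such that $\mathrm{B}(x|y)\le |x|+c$ for all $x,y$; (3) there is a constant $d$, independent of $y$, such that $|\{x : \mathrm{B}(x|y)\le n\}|\le d\cdot 2^n$ for all $y$ and $n$; (4) for every partial computable function $f:2^{<\omega}\to 2^{<\omega}$ there is a constant $c_f$ such that $\mathrm{B}(f(x)|y)\le \mathrm{B}(x|y)+c_f$ for all $y$ and all $x$ in the domain of $f$; (5) there is a constant $e$ such that $\mathrm{B}(x|x)\le e$ for all $x$; (6) $|\mathrm{B}(x|y)-\mathrm{C}(x|y)|$ is unbounded over $x,y\in 2^{<\omega}$.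
   Context: $2^{<\omega}$ is the set of finite binary strings; $|x|$ is the length of $x$; $\langle\cdot,\cdot\rangle$ is a fixed computable pairing function on strings. For a machine $T$, $\mathrm{C}_T(x|y)=\min\{|z| : T(\langle z,y\rangle)=x\}$. Fix an optimal machine $\mathbb{U}$ (for every machine $T$ there is $c_T$ with $\mathrm{C}_{\mathbb{U}}(x|y)\le \mathrm{C}_T(x|y)+c_T$ for all $x,y$) and set $\mathrm{C}(x|y)=\mathrm{C}_{\mathbb{U}}(x|y)$. Upper semi-computable uniformly in $x,y$ means the predicate ''$\mathrm{B}(x|y)\le k$'' is computably enumerable uniformly in $x,y,k$. *)

(* Defs.v *)
From mathcomp Require Import all_boot.
From Stdlib Require List.

Set Implicit Arguments.
Unset Strict Implicit.
Unset Printing Implicit Defensive.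

Inductive code : Type :=
  | CZero : code
  | CSucc : code
  | CProj : nat -> code
  | CComp : code -> list code -> code
  | CPrec : code -> code -> code
  | CMu   : code -> code.

Inductive eval : code -> seq nat -> nat -> Prop :=
  | evZero v : eval CZero v 0
  | evSucc v : eval CSucc v (head 0 v).+1
  | evProj i v : eval (CProj i) v (nth 0 v i)
  | evComp f gs v ys y :
      List.Forall2 (fun g y0 => eval g v y0) gs ys ->
      eval f ys y -> eval (CComp f gs) v y
  | evPrec0 f g v y : eval f v y -> eval (CPrec f g) (0 :: v) y
  | evPrecS f g n v r y :
      eval (CPrec f g) (n :: v) r -> eval g (n :: r :: v) y ->
      eval (CPrec f g) (n.+1 :: v) y
  | evMu f v n :
      eval f (n :: v) 0 ->
      (forall m, m < n -> exists k, eval f (m :: v) k.+1) ->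
      eval (CMu f) v n.

Definition bstr := seq bool.

(* encode s = (the number whose binary expansion is 1 followed by s) - 1;
   a bijection seq bool -> nat. *)
Definition encode (s : bstr) : nat :=
  (foldl (fun acc (b : bool) => (acc.*2 + b)%N) 1 s).-1.

(* f : 2^{<omega} -> 2^{<omega} is partial computable; [f s = None] means undefined. *)
Definition pcomputable (f : bstr -> option bstr) : Prop :=
  exists c : code, forall (s : bstr) (n : nat),
    eval c [:: encode s] n <-> exists t, f s = Some t /\ n = encode t.

Definition spair (z y : bstr) : bstr :=
  flatten [seq [:: b; b] | b <- z] ++ [:: false; true] ++ y.

Definition machine (T : bstr -> option bstr) : Prop := pcomputable T.

(* U is optimal: for every machine T there is c_T with C_U(x|y) <= C_T(x|y) + c_T,
   i.e. every T-description z of x given y yields a U-description no more than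
   c_T bits longer. *)
Definition optimal (U : bstr -> option bstr) : Prop :=
  forall T, machine T -> exists cT : nat, forall x y z : bstr,
    T (spair z y) = Some x ->
    exists z', U (spair z' y) = Some x /\ size z' <= size z + cT.

(* [isC U x y m] : m = C_U(x|y) = min{|z| : U(<z,y>) = x}. *)
Definition isC (U : bstr -> option bstr) (x y : bstr) (m : nat) : Prop :=
  (exists z, U (spair z y) = Some x /\ size z = m) /\
  (forall z, U (spair z y) = Some x -> m <= size z).

(* "B(x|y) <= k" is c.e. uniformly in x, y, k: it is the halting set of a program. *)
Definition upper_semicomputable (B : bstr -> bstr -> nat) : Prop :=
  exists c : code, forall (x y : bstr) (k : nat),
    B x y <= k <-> exists n, eval c [:: encode x; encode y; k] n.

Definition natdist (a b : nat) : nat := (a - b) + (b - a).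

(* Main.v *)
Require Import Defs.
From mathcomp Require Import all_boot zify.
From Stdlib Require List ClassicalEpsilon Classical.
Set Implicit Arguments. Unset Strict Implicit. Unset Printing Implicit Defensive.

Definition code_ind' (P : code -> Prop)
  (HZ : P CZero) (HS : P CSucc) (HP : forall i, P (CProj i))
  (HC : forall f gs, P f -> List.Forall P gs -> P (CComp f gs))
  (HR : forall f g, P f -> P g -> P (CPrec f g))
  (HM : forall f, P f -> P (CMu f)) : forall c, P c :=
  fix F c := match c with
  | CZero => HZ | CSucc => HS | CProj i => HP i
  | CComp f gs => HC f gs (F f) ((fix G gs := match gs return List.Forall P gs with
        | nil => List.Forall_nil _ | cons g gs' => List.Forall_cons g (F g) (G gs') end) gs)
  | CPrec f g => HR f g (F f) (F g)
  | CMu f => HM f (F f) end.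

Definition eval_ind' (P : code -> seq nat -> nat -> Prop)
  (HZ : forall v, P CZero v 0)
  (HS : forall v, P CSucc v (head 0 v).+1)
  (HP : forall i v, P (CProj i) v (nth 0 v i))
  (HC : forall f gs v ys y, List.Forall2 (fun g y0 => eval g v y0 /\ P g v y0) gs ys ->
        eval f ys y -> P f ys y -> P (CComp f gs) v y)
  (HR0 : forall f g v y, eval f v y -> P f v y -> P (CPrec f g) (0 :: v) y)
  (HRS : forall f g n v r y, eval (CPrec f g) (n :: v) r -> P (CPrec f g) (n :: v) r ->
        eval g (n :: r :: v) y -> P g (n :: r :: v) y -> P (CPrec f g) (n.+1 :: v) y)
  (HM : forall f v n, eval f (n :: v) 0 -> P f (n :: v) 0 ->
        (forall m, m < n -> exists k, eval f (m :: v) k.+1 /\ P f (m :: v) k.+1) ->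
        P (CMu f) v n) : forall c v y, eval c v y -> P c v y :=
  fix F c v y (e : eval c v y) {struct e} : P c v y :=
  match e in eval c v y return P c v y with
  | evZero v => HZ v
  | evSucc v => HS v
  | evProj i v => HP i v
  | evComp f gs v ys y H e1 => HC f gs v ys y
      ((fix G gs ys (H : List.Forall2 (fun g y0 => eval g v y0) gs ys) :=
         match H in List.Forall2 _ gs ys return List.Forall2 (fun g y0 => eval g v y0 /\ P g v y0) gs ys with
         | List.Forall2_nil => List.Forall2_nil _
         | List.Forall2_cons g y0 gs' ys' h t => List.Forall2_cons g y0 (conj h (F g v y0 h)) (G gs' ys' t)
         end) gs ys H) e1 (F f ys y e1)
  | evPrec0 f g v y e1 => HR0 f g v y e1 (F f v y e1)
  | evPrecS f g n v r y e1 e2 => HRS f g n v r y e1 (F _ _ _ e1) e2 (F _ _ _ e2)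
  | evMu f v n e1 H => HM f v n e1 (F _ _ _ e1)
      (fun m Hm => match H m Hm with ex_intro k Hk => ex_intro _ k (conj Hk (F _ _ _ Hk)) end)
  end.

Lemma eval_det c v y : eval c v y -> forall y', eval c v y' -> y = y'.
Proof.
move: c v y; apply: eval_ind'.
- by move=> v y' H; inversion H.
- by move=> v y' H; inversion H.
- by move=> i v y' H; inversion H.
- move=> f gs v ys y H1 e1 IH y' H; inversion H; subst.
  have eys : ys = ys0.
    elim: H1 ys0 H3 {H H6 e1 IH} => [|g y0 gs' ys' [h Ih] _ IHl] ys0 H3; inversion H3 => //.
    subst; match goal with [h1 : eval g v _, h2 : List.Forall2 _ gs' _ |- _] => by rewrite (Ih _ h1) (IHl _ h2) end.
  by subst; apply: IH.
- move=> f g v y e IH y' H; inversion H; subst; exact: IH.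
- move=> f g n v r y e1 IH1 e2 IH2 y' H; inversion H; subst.
  by have er := IH1 _ H5; subst; apply: IH2.
- move=> f v n e IH Hm y' H; inversion H; subst.
  case: (ltngtP n y') => // Hl.
  + by have [k Hk] := H2 _ Hl; have := IH _ Hk.
  + by have [k [Hk IHk]] := Hm _ Hl; have := IHk _ H1.
Qed.

Fixpoint mapo (h : code -> option nat) (gs : seq code) : option (seq nat) :=
  match gs with
  | [::] => Some [::]
  | g :: gs' => match h g, mapo h gs' with Some y, Some ys => Some (y :: ys) | _, _ => None end
  end.

Fixpoint ploop (F : option nat) (G : nat -> nat -> option nat) (n : nat) : option nat :=
  match n with 0 => F | m.+1 => match ploop F G m with Some r => G m r | None => None end end.

Fixpoint srch (h : nat -> option nat) (i m : nat) : option nat :=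
  match i with 0 => None | i'.+1 =>
    match h m with Some 0 => Some m | Some _ => srch h i' m.+1 | None => None end end.

Fixpoint run (t : nat) (c : code) (v : seq nat) {struct c} : option nat :=
  match c with
  | CZero => Some 0
  | CSucc => Some (head 0 v).+1
  | CProj i => Some (nth 0 v i)
  | CComp f gs => match mapo (fun g => run t g v) gs with Some ys => run t f ys | None => None end
  | CPrec f g => match v with [::] => None
      | n :: v' => ploop (run t f v') (fun m r => run t g (m :: r :: v')) n end
  | CMu f => srch (fun m => run t f (m :: v)) t 0
  end.

Lemma srch_sound h i m n : srch h i m = Some n ->
  m <= n /\ h n = Some 0 /\ forall j, m <= j < n -> exists k, h j = Some k.+1.
Proof.
elim: i m => [|i IH] m //=.
case E: (h m) => [[|k]|] // .
  by case=> <-; split=> //; split=> // j; case/andP=> a b; move: (leq_ltn_trans a b); rewrite ltnn.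
move/IH=> [a [b c]]; split; first exact: ltnW.
split=> // j /andP[j1 j2]; case: (ltngtP m j) => Hj.
- by apply: c; rewrite Hj j2.
- by move: j1; rewrite leqNgt Hj.
- by subst; exists k.
Qed.

Lemma srch_mono h h' i i' m n : srch h i m = Some n -> i <= i' ->
  (forall j a, h j = Some a -> h' j = Some a) -> srch h' i' m = Some n.
Proof.
elim: i i' m => [|i IH] [|i'] m //= H Hi Hh.
case E: (h m) H => [[|k]|] //; rewrite (Hh _ _ E) //.
by move=> H; apply: IH.
Qed.

Lemma srch_complete h i m n : m <= n < m + i -> h n = Some 0 ->
  (forall j, m <= j < n -> exists k, h j = Some k.+1) -> srch h i m = Some n.
Proof.
elim: i m => [|i IH] m /=; first by rewrite addn0 => /andP[a b]; move: (leq_trans b a); rewrite ltnn.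
move=> /andP[a b] Hn Hj; case: (ltngtP m n) => Hmn.
- have [k Hk] : exists k, h m = Some k.+1 by apply: Hj; rewrite leqnn Hmn.
  rewrite Hk; apply: IH; first by rewrite Hmn addSnnS.
  - exact: Hn.
  by move=> j /andP[j1 j2]; apply: Hj; rewrite (ltnW j1) j2.
- by move: a; rewrite leqNgt Hmn.
- by subst; rewrite Hn.
Qed.

Lemma ploop_ind (P : nat -> nat -> Prop) F G n y : ploop F G n = Some y ->
  (forall y, F = Some y -> P 0 y) -> (forall m r y, P m r -> G m r = Some y -> P m.+1 y) -> P n y.
Proof.
move=> H HF HG; elim: n y H => [|n IH] y /=; first exact: HF.
case E: (ploop F G n) => [r|] // H; exact: HG (IH _ E) H.
Qed.

Lemma run_sound c : forall t v y, run t c v = Some y -> eval c v y.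
Proof.
elim/code_ind': c.
- by move=> t v y [<-]; constructor.
- by move=> t v y [<-]; constructor.
- by move=> i t v y [<-]; constructor.
- move=> f gs IHf IHgs t v y /=.
  case E: (mapo _ gs) => [ys|] // H; apply: (@evComp _ _ _ ys); last exact: IHf H.
  elim: IHgs ys E {H} => [|g gs' Hg _ IH] ys /=; first by case=> <-.
  case E1: (run t g v) => [y0|] //; case E2: (mapo _ gs') => [ys'|] // [<-].
  constructor; [exact: Hg E1 | exact: IH].
- move=> f g IHf IHg t [|n v] y //= H.
  apply: (ploop_ind (P := fun n y => eval (CPrec f g) (n :: v) y) H).
  + by move=> y0 /IHf e; constructor.
  + by move=> m r y0 e /IHg e2; apply: evPrecS e e2.
- move=> f IHf t v y /= /srch_sound [_ [H0 Hj]].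
  constructor; first exact: IHf H0.
  by move=> m Hm; have [k Hk] := Hj m Hm; exists k; exact: IHf Hk.
Qed.

Lemma run_mono c : forall t t' v y, run t c v = Some y -> t <= t' -> run t' c v = Some y.
Proof.
elim/code_ind': c => //.
- move=> f gs IHf IHgs t t' v y /= H Ht.
  have Hm : forall ys, mapo (fun g => run t g v) gs = Some ys -> mapo (fun g => run t' g v) gs = Some ys.
    elim: IHgs => [|g gs' Hg _ IH] ys //=.
    case E1: (run t g v) => [y0|] //; case E2: (mapo _ gs') => [ys'|] // [<-].
    by rewrite (Hg _ _ _ _ E1 Ht) (IH _ E2).
  move: H; case E: (mapo _ gs) => [ys|] // H.
  by rewrite (Hm _ E); exact: IHf H Ht.
- move=> f g IHf IHg t t' [|n v] y //= H Ht.
  elim: n y H => [|n IH] y /=; first by move=> H; exact: IHf H Ht.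
  case E: (ploop _ _ n) => [r|] // H.
  by rewrite (IH _ E); exact: IHg H Ht.
- move=> f IHf t t' v y /= H Ht.
  apply: (srch_mono H Ht) => j a H0; exact: IHf H0 Ht.
Qed.

Lemma fuel_bound (Q : nat -> nat -> Prop) n :
  (forall m t t', Q m t -> t <= t' -> Q m t') ->
  (forall m, m < n -> exists t, Q m t) -> exists T, forall m, m < n -> Q m T.
Proof.
move=> Hmon; elim: n => [|n IH] H; first by exists 0.
have [T1 HT1] := IH (fun m Hm => H m (ltnW Hm)).
have [T2 HT2] := H n (ltnSn n).
exists (maxn T1 T2) => m; rewrite ltnS leq_eqVlt; case/orP=> [/eqP->|Hm].
- by apply: Hmon HT2 _; rewrite leq_maxr.
- by apply: Hmon (HT1 _ Hm) _; rewrite leq_maxl.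
Qed.

Lemma run_complete c v y : eval c v y -> exists t, run t c v = Some y.
Proof.
move: c v y; apply: eval_ind'.
- by move=> v; exists 0.
- by move=> v; exists 0.
- by move=> i v; exists 0.
- move=> f gs v ys y H _ [tf Hf].
  have [T HT] : exists T, forall t, T <= t -> mapo (fun g => run t g v) gs = Some ys.
    elim: H => [|g y0 gs' ys' [_ [t0 H0]] _ [T HT]]; first by exists 0.
    exists (maxn t0 T) => t Ht /=.
    rewrite (run_mono H0 (leq_trans (leq_maxl _ _) Ht)).
    by rewrite (HT _ (leq_trans (leq_maxr _ _) Ht)).
  exists (maxn tf T) => /=; rewrite (HT _ (leq_maxr _ _)).
  exact: run_mono Hf (leq_maxl _ _).
- by move=> f g v y _ [t Ht]; exists t.
- move=> f g n v r y _ [t1 H1] _ [t2 H2]; exists (maxn t1 t2) => /=.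
  have H1' := run_mono H1 (leq_maxl t1 t2); rewrite /= in H1'; rewrite H1'.
  exact: run_mono H2 (leq_maxr _ _).
- move=> f v n _ [t0 H0] Hm.
  have Hmon : forall m t t', (exists k, run t f (m :: v) = Some k.+1) -> t <= t' -> exists k, run t' f (m :: v) = Some k.+1.
    by move=> m t t' [k Hk] Htt; exists k; exact: run_mono Hk Htt.
  have [T HT] := fuel_bound (Q := fun m t => exists k, run t f (m :: v) = Some k.+1) Hmon
     (fun m Hm' => match Hm m Hm' with ex_intro k (conj _ (ex_intro t Ht)) => ex_intro _ t (ex_intro _ k Ht) end).
  exists (maxn (maxn T t0) n.+1) => /=; apply: srch_complete.
  + by rewrite add0n leq0n /= (leq_trans _ (leq_maxr _ _)).
  + apply: run_mono H0 _; exact: leq_trans (leq_maxr _ _) (leq_maxl _ _).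
  + move=> j /andP[_ Hj]; have [k Hk] := HT _ Hj; exists k.
    apply: run_mono Hk _; exact: leq_trans (leq_maxl _ _) (leq_maxl _ _).
Qed.

Lemma ev1 f g1 v a y : eval g1 v a -> eval f [:: a] y -> eval (CComp f [:: g1]) v y.
Proof. by move=> h1 h; apply: (@evComp _ _ _ [:: a]) => //; constructor. Qed.
Lemma ev2 f g1 g2 v a b y : eval g1 v a -> eval g2 v b -> eval f [:: a; b] y ->
  eval (CComp f [:: g1; g2]) v y.
Proof. by move=> h1 h2 h; apply: (@evComp _ _ _ [:: a; b]) => //; repeat constructor. Qed.
Lemma ev3 f g1 g2 g3 v a b c y : eval g1 v a -> eval g2 v b -> eval g3 v c ->
  eval f [:: a; b; c] y -> eval (CComp f [:: g1; g2; g3]) v y.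
Proof. by move=> h1 h2 h3 h; apply: (@evComp _ _ _ [:: a; b; c]) => //; repeat constructor. Qed.

Lemma evprec f g v (h : nat -> nat) n : eval f v (h 0) ->
  (forall i, i < n -> eval g (i :: h i :: v) (h i.+1)) -> eval (CPrec f g) (n :: v) (h n).
Proof.
move=> H0 HS; elim: n HS => [|n IH] HS; first by constructor.
apply: evPrecS; first by apply: IH => i Hi; apply: HS; exact: ltnW.
exact: HS.
Qed.

Lemma evP i v y : y = nth 0 v i -> eval (CProj i) v y.
Proof. by move=> ->; constructor. Qed.

Fixpoint cK n := match n with 0 => CZero | m.+1 => CComp CSucc [:: cK m] end.
Lemma evK n v : eval (cK n) v n.
Proof. elim: n => [|n IH] /=; first constructor. by apply: ev1 IH _; constructor. Qed.

Definition cadd := CPrec (CProj 0) (CComp CSucc [:: CProj 1]).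
Lemma evadd a b : eval cadd [:: a; b] (a + b).
Proof.
apply: (evprec (h := fun i => i + b)); first exact: evP.
by move=> i _; apply: ev1; [exact: evP | constructor].
Qed.
Definition cmul := CPrec CZero (CComp cadd [:: CProj 1; CProj 2]).
Lemma evmul a b : eval cmul [:: a; b] (a * b).
Proof.
apply: (evprec (h := fun i => i * b)); first by rewrite mul0n; constructor.
move=> i _; rewrite mulSn addnC; apply: ev2; [exact: evP | exact: evP | exact: evadd].
Qed.
Definition cpred := CPrec CZero (CProj 0).
Lemma evpred a : eval cpred [:: a] a.-1.
Proof. apply: (evprec (h := fun i => i.-1)); first constructor. by move=> i _; exact: evP. Qed.
Definition csub := CComp (CPrec (CProj 0) (CComp cpred [:: CProj 1])) [:: CProj 1; CProj 0].
Lemma evsub a b : eval csub [:: a; b] (a - b).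
Proof.
apply: ev2; [exact: evP | exact: evP |].
apply: (evprec (h := fun i => a - i)); first by rewrite subn0; exact: evP.
move=> i _; rewrite subnS; apply: ev1; [exact: evP | exact: evpred].
Qed.
Definition cifz := CPrec (CProj 0) (CProj 3).
Lemma evifz a b c : eval cifz [:: a; b; c] (if a == 0 then b else c).
Proof.
apply: (evprec (h := fun i => if i == 0 then b else c)); first exact: evP.
by move=> i _; exact: evP.
Qed.

Definition Add g1 g2 := CComp cadd [:: g1; g2].
Definition Mul g1 g2 := CComp cmul [:: g1; g2].
Definition Subc g1 g2 := CComp csub [:: g1; g2].
Definition Pred g := CComp cpred [:: g].
Definition Suc g := CComp CSucc [:: g].
Definition Ifz g1 g2 g3 := CComp cifz [:: g1; g2; g3].
Definition Sg g := Ifz g (cK 0) (cK 1).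
Definition Dist g1 g2 := Add (Subc g1 g2) (Subc g2 g1).
Definition Eqb g1 g2 := Ifz (Dist g1 g2) (cK 1) (cK 0).
Definition Ltb g1 g2 := Ifz (Subc (Suc g1) g2) (cK 1) (cK 0).

Lemma eAdd g1 g2 v a b : eval g1 v a -> eval g2 v b -> eval (Add g1 g2) v (a + b).
Proof. by move=> h1 h2; apply: ev2 h1 h2 _; exact: evadd. Qed.
Lemma eMul g1 g2 v a b : eval g1 v a -> eval g2 v b -> eval (Mul g1 g2) v (a * b).
Proof. by move=> h1 h2; apply: ev2 h1 h2 _; exact: evmul. Qed.
Lemma eSubc g1 g2 v a b : eval g1 v a -> eval g2 v b -> eval (Subc g1 g2) v (a - b).
Proof. by move=> h1 h2; apply: ev2 h1 h2 _; exact: evsub. Qed.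
Lemma ePred g v a : eval g v a -> eval (Pred g) v a.-1.
Proof. by move=> h1; apply: ev1 h1 _; exact: evpred. Qed.
Lemma eSuc g v a : eval g v a -> eval (Suc g) v a.+1.
Proof. by move=> h1; apply: ev1 h1 _; constructor. Qed.
Lemma eIfz g1 g2 g3 v a b c : eval g1 v a -> eval g2 v b -> eval g3 v c ->
  eval (Ifz g1 g2 g3) v (if a == 0 then b else c).
Proof. by move=> h1 h2 h3; apply: ev3 h1 h2 h3 _; exact: evifz. Qed.
Lemma eSg g v a : eval g v a -> eval (Sg g) v (a != 0).
Proof. by move=> h; have := eIfz h (evK 0 v) (evK 1 v); case: (a == 0). Qed.
Lemma eEqb g1 g2 v a b : eval g1 v a -> eval g2 v b -> eval (Eqb g1 g2) v (a == b).
Proof.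
move=> h1 h2; have := eIfz (eAdd (eSubc h1 h2) (eSubc h2 h1)) (evK 1 v) (evK 0 v).
have -> : (a - b + (b - a) == 0) = (a == b) by rewrite addn_eq0 !subn_eq0 eqn_leq.
by case: (a == b).
Qed.
Lemma eLtb g1 g2 v a b : eval g1 v a -> eval g2 v b -> eval (Ltb g1 g2) v (a < b).
Proof.
move=> h1 h2; have := eIfz (eSubc (eSuc h1) h2) (evK 1 v) (evK 0 v).
by rewrite subn_eq0; case: (a < b).
Qed.
Lemma eP i v : eval (CProj i) v (nth 0 v i).
Proof. by constructor. Qed.
Lemma eK n v : eval (cK n) v n.
Proof. exact: evK. Qed.

Definition enc (o : option nat) := match o with Some y => y.+1 | None => 0 end.

Definition projs k L := [seq CProj (i + k) | i <- iota 0 L].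

Lemma projs_ok pre v : List.Forall2 (fun g y => eval g (pre ++ v) y) (projs (size pre) (size v)) v.
Proof.
rewrite /projs.
have : forall j, j <= size v -> List.Forall2 (fun g y => eval g (pre ++ v) y)
   [seq CProj (i + size pre) | i <- iota j (size v - j)] (drop j v).
  move=> j; elim: {j}(size v - j) {-2}j (erefl (size v - j)) => [|d IH] j Hd Hj.
  - have -> : j = size v by lia. by rewrite drop_size subnn; constructor.
  - rewrite Hd /= (drop_nth 0); last by lia.
    constructor; first by apply: evP; rewrite nth_cat ltnNge leq_addl /= addnK.
    by have := IH j.+1 (ltac:(lia)) (ltac:(lia)); rewrite (_ : size v - j.+1 = d) //; lia.
by move=> /(_ 0 (leq0n _)); rewrite subn0 drop0.
Qed.

Fixpoint Sc (c : code) (L : nat) {struct c} : code :=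
  match c with
  | CZero => cK 1
  | CSucc => Suc (Suc (CProj 1))
  | CProj i => Suc (CProj i.+1)
  | CComp f gs =>
      Mul (foldr (fun g acc => Mul (Sg (Sc g L)) acc) (cK 1) gs)
          (CComp (Sc f (size gs)) (CProj 0 :: map (fun g => Pred (Sc g L)) gs))
  | CPrec f g => match L with 0 => cK 0 | L'.+1 =>
      CComp (CPrec (Sc f L')
                   (Mul (Sg (CProj 1)) (CComp (Sc g L'.+2) (CProj 2 :: CProj 0 :: Pred (CProj 1) :: projs 3 L'))))
            (CProj 1 :: CProj 0 :: projs 2 L') end
  | CMu f =>
      let St := CComp (CPrec (cK 0)
                  (Ifz (CProj 1)
                       (Ifz (CComp (Sc f L.+1) (CProj 2 :: CProj 0 :: projs 3 L)) (cK 1)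
                            (Ifz (Pred (CComp (Sc f L.+1) (CProj 2 :: CProj 0 :: projs 3 L)))
                                 (Suc (Suc (CProj 0))) (cK 0)))
                       (CProj 1)))
                  (CProj 0 :: CProj 0 :: projs 1 L) in
      Ifz (Pred St) (cK 0) (Pred St)
  end.

Lemma projs_ok' pre v k L : k = size pre -> L = size v ->
  List.Forall2 (fun g y => eval g (pre ++ v) y) (projs k L) v.
Proof. by move=> -> ->; exact: projs_ok. Qed.

Fixpoint mst (h : nat -> option nat) (j : nat) : nat :=
  match j with 0 => 0 | j'.+1 => let s := mst h j' in
    if s == 0 then match h j' with None => 1 | Some 0 => j'.+2 | Some _ => 0 end else s end.

Lemma mst_stay h j i : mst h j != 0 -> mst h (i + j) = mst h j.
Proof. by move=> H; elim: i => //= i ->; rewrite (negbTE H). Qed.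

Definition fin s := if s.-1 == 0 then 0 else s.-1.

Lemma mst_srch h i j : mst h j = 0 -> fin (mst h (i + j)) = enc (srch h i j).
Proof.
elim: i j => [|i IH] j H0; first by rewrite add0n H0.
rewrite addSnnS /=.
case E: (h j) => [[|k]|].
- have H1 : mst h j.+1 = j.+2 by rewrite /= H0 eqxx E.
  by rewrite mst_stay ?H1.
- by apply: IH; rewrite /= H0 eqxx E.
- have H1 : mst h j.+1 = 1 by rewrite /= H0 eqxx E.
  by rewrite mst_stay ?H1.
Qed.

Lemma Sc_ok c : forall L t v, size v = L -> eval (Sc c L) (t :: v) (enc (run t c v)).
Proof.
elim/code_ind': c.
- by move=> L t v _; exact: eK.
- by move=> L t v _; rewrite /=; apply: eSuc; apply: eSuc; apply: evP; case: v.
- by move=> i L t v _; apply: eSuc; exact: evP.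
- move=> f gs IHf IHgs L t v Hv /=.
  set os := [seq enc (run t g v) | g <- gs].
  have Hall : eval (foldr (fun g acc => Mul (Sg (Sc g L)) acc) (cK 1) gs) (t :: v) (all (fun o => o != 0) os).
    rewrite /os; elim: IHgs {os} => [|g gs' Hg _ IH] /=; first exact: (eK 1).
    by rewrite -mulnb; apply: eMul IH; apply: eSg; exact: Hg.
  have Hf : eval (CComp (Sc f (size gs)) (CProj 0 :: [seq Pred (Sc g L) | g <- gs])) (t :: v)
              (enc (run t f (map predn os))).
    apply: (@evComp _ _ _ (t :: map predn os)); last by apply: IHf; rewrite size_map size_map.
    constructor; first exact: evP.
    rewrite /os; elim: IHgs {os Hall} => [|g gs' Hg _ IH] /=; first constructor.
    by constructor=> //; apply: ePred; exact: Hg.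
  have Hm : forall ys, mapo (fun g => run t g v) gs = Some ys -> all (fun o => o != 0) os /\ map predn os = ys.
    rewrite /os; elim: gs {IHgs Hall Hf os} => [|g gs' IH] ys /=; first by case=> <-.
    case: (run t g v) => // y; case: (mapo _ gs') (IH) => [ys'|] // /(_ ys' erefl) [-> ->] [<-] //.
  have Hn : mapo (fun g => run t g v) gs = None -> all (fun o => o != 0) os = false.
    rewrite /os; elim: gs {IHgs Hall Hf os Hm} => [|g gs' IH] //=.
    case: (run t g v) => // y; case: (mapo _ gs') (IH) => [ys'|] // /(_ erefl) -> _; by rewrite andbF.
  case E: (mapo _ gs) => [ys|].
  + have [H1 H2] := Hm _ E; rewrite -H2.
    by have := eMul Hall Hf; rewrite H1 mul1n.
  + by have := eMul Hall Hf; rewrite (Hn E) mul0n.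
- move=> f g IHf IHg [|L] t v Hv; first by case: v Hv => // _; exact: eK.
  case: v Hv => [|n v] // [Hv] /=.
  apply: (@evComp _ _ _ (n :: t :: v)).
    constructor; first exact: evP. constructor; first exact: evP.
    by have := projs_ok [:: t; n] v; rewrite Hv.
  apply: (evprec (h := fun i => enc (ploop (run t f v) (fun m r => run t g [:: m, r & v]) i))).
    exact: IHf.
  move=> i _ /=; set hi := enc (ploop _ _ i).
  have Hg : eval (CComp (Sc g L.+2) [:: CProj 2, CProj 0, Pred (CProj 1) & projs 3 L]) [:: i, hi, t & v]
             (enc (run t g [:: i, hi.-1 & v])).
    apply: (@evComp _ _ _ [:: t, i, hi.-1 & v]); last by apply: IHg; rewrite /= Hv.
    constructor; first exact: evP. constructor; first exact: evP.
    constructor; first by apply: ePred; exact: evP.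
    by have := projs_ok [:: i; hi; t] v; rewrite Hv.
  have := eMul (eSg (evP (i := 1) (v := [:: i, hi, t & v]) erefl)) Hg.
  by rewrite /hi; case: (ploop _ _ i) => [r|] /=; rewrite ?mul1n ?mul0n.
- move=> f IHf L t v Hv /=.
  set h := fun m => run t f (m :: v).
  have HSt : eval (CComp (CPrec (cK 0) (Ifz (CProj 1)
                       (Ifz (CComp (Sc f L.+1) (CProj 2 :: CProj 0 :: projs 3 L)) (cK 1)
                            (Ifz (Pred (CComp (Sc f L.+1) (CProj 2 :: CProj 0 :: projs 3 L)))
                                 (Suc (Suc (CProj 0))) (cK 0)))
                       (CProj 1))) (CProj 0 :: CProj 0 :: projs 1 L)) (t :: v) (mst h t).
    apply: (@evComp _ _ _ (t :: t :: v)).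
      constructor; first exact: evP. constructor; first exact: evP.
      by have := projs_ok [:: t] v; rewrite Hv.
    apply: (evprec (h := mst h)); first exact: eK.
    move=> j _.
    have Ho : eval (CComp (Sc f L.+1) (CProj 2 :: CProj 0 :: projs 3 L)) [:: j, mst h j, t & v] (enc (h j)).
      apply: (@evComp _ _ _ (t :: j :: v)); last by apply: IHf; rewrite /= Hv.
      constructor; first exact: evP. constructor; first exact: evP.
      by have := projs_ok [:: j; mst h j; t] v; rewrite Hv.
    have := eIfz (evP (i := 1) (v := [:: j, mst h j, t & v]) erefl)
              (eIfz Ho (eK 1 _) (eIfz (ePred Ho) (eSuc (eSuc (evP (i := 0) (v := [:: j, mst h j, t & v]) erefl))) (eK 0 _)))
              (evP (i := 1) (v := [:: j, mst h j, t & v]) erefl).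
    rewrite /=; case: (mst h j == 0) => //=.
    by case: (h j) => [[|k]|].
  have := eIfz (ePred HSt) (eK 0 _) (ePred HSt).
  have := @mst_srch h t 0 erefl; rewrite addn0 /fin => <-.
  done.
Qed.

Definition bf (acc : nat) (b : bool) := acc.*2 + b.
Definition Nv (s : bstr) := foldl bf 1 s.
Definition valb (s : bstr) := foldl bf 0 s.

Lemma foldl_bf a s : foldl bf a s = a * 2 ^ size s + valb s.
Proof.
rewrite /valb; elim/last_ind: s a => [|s b IH] a /=; first by rewrite muln1 addn0.
rewrite !foldl_rcons IH (IH 0) /bf size_rcons expnS; lia.
Qed.

Lemma valb_lt s : valb s < 2 ^ size s.
Proof.
rewrite /valb; elim/last_ind: s => [|s b IH] //=.
rewrite foldl_rcons size_rcons expnS [X in X < _]/bf -muln2; case: b => /=; lia.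
Qed.

Lemma Nv_val s : Nv s = 2 ^ size s + valb s.
Proof. by rewrite /Nv foldl_bf mul1n. Qed.

Lemma Nv_gt0 s : 0 < Nv s.
Proof. rewrite Nv_val; have := expn_gt0 2 (size s); lia. Qed.

Lemma encodeE s : encode s = (Nv s).-1.
Proof. by []. Qed.

Lemma encodeS s : (encode s).+1 = Nv s.
Proof. by rewrite encodeE prednK // Nv_gt0. Qed.

Lemma Nv_bounds s : 2 ^ size s <= Nv s < 2 ^ (size s).+1.
Proof. rewrite Nv_val expnS; have := valb_lt s; lia. Qed.

Lemma Nv_rcons s b : Nv (rcons s b) = b + (Nv s).*2.
Proof. by rewrite /Nv foldl_rcons /bf addnC. Qed.

Lemma Nv_cat s t : Nv (s ++ t) = Nv s * 2 ^ size t + valb t.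
Proof. by rewrite /Nv foldl_cat foldl_bf. Qed.

Lemma Nv_nil : Nv [::] = 1. Proof. by []. Qed.

Lemma Nv_inj : injective Nv.
Proof.
move=> s; elim/last_ind: s => [|s b IH] t.
- case/lastP: t => [|t c] // ; rewrite Nv_rcons -muln2 /= => H.
  rewrite Nv_nil in H; have := Nv_gt0 t; case: c H => /= H ? ; exfalso; lia.
- case/lastP: t => [|t c].
  + rewrite Nv_rcons -muln2 Nv_nil => H; have := Nv_gt0 s; case: b H => /= H ? ; exfalso; lia.
  + rewrite !Nv_rcons => H.
    have Hb : b = c.
      by move: (congr1 odd H); rewrite !oddD !odd_double !addbF; case: b {H}; case: c.
    subst c; have : Nv s = Nv t by move: H; rewrite -!muln2; lia.
    by move/IH=> ->.
Qed.

Lemma encode_inj : injective encode.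
Proof. by move=> s t H; apply: Nv_inj; rewrite -!encodeS H. Qed.

Lemma Nv_surj M : 0 < M -> exists s, Nv s = M.
Proof.
elim: M {-2}M (leqnn M) => [|n IH] M HM HM0; first by move: HM0; rewrite lt0n; case/negP; rewrite -leqn0.
case: (ltnP 1 M) => HM1.
- have [s Hs] : exists s, Nv s = M./2.
    apply: IH; first by rewrite -ltnS; apply: leq_trans HM; rewrite ltn_half_double //; lia.
    by rewrite half_gt0.
  exists (rcons s (odd M)); rewrite Nv_rcons Hs; exact: odd_double_half.
- by exists [::]; apply/eqP; rewrite eqn_leq HM1 HM0.
Qed.

Lemma encode_surj n : exists s, encode s = n.
Proof.
have [s Hs] := Nv_surj (ltn0Sn n); exists s; by rewrite encodeE Hs.
Qed.

Definition dbl (z : bstr) : bstr := flatten [seq [:: b; b] | b <- z].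

Lemma spairE z y : spair z y = dbl z ++ [:: false; true] ++ y.
Proof. by []. Qed.

Lemma dbl_rcons z b : dbl (rcons z b) = dbl z ++ [:: b; b].
Proof. by rewrite /dbl map_rcons flatten_rcons. Qed.

Lemma spair_inj z1 y1 z2 y2 : spair z1 y1 = spair z2 y2 -> z1 = z2 /\ y1 = y2.
Proof.
elim: z1 z2 => [|b z1 IH] [|c z2] //=.
- by case=> ->.
- by case: c.
- by case: b.
- by case=> -> _ H; case: (IH _ H) => -> ->.
Qed.

Fixpoint hibf (n : nat) : nat := match n with 0 => 1 | i.+1 => if i.+1 == 2 * hibf i then 2 * hibf i else hibf i end.
Fixpoint lgf (n : nat) : nat := match n with 0 => 0 | i.+1 => lgf i + (i.+1 == 2 * hibf i) end.

Lemma hibfS i : hibf i.+1 = if i.+1 == 2 * hibf i then 2 * hibf i else hibf i.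
Proof. by []. Qed.
Lemma lgfS i : lgf i.+1 = lgf i + (i.+1 == 2 * hibf i).
Proof. by []. Qed.

Lemma hib_lg M : forall k, 2 ^ k <= M < 2 ^ k.+1 -> hibf M = 2 ^ k /\ lgf M = k.
Proof.
elim: M => [|i IH] k; first by rewrite leqn0 expn_eq0.
case: i IH => [|i] IH.
- move=> Hk; have Hk0 : k = 0.
    by case: k Hk => // k; rewrite expnS; have := expn_gt0 2 k; lia.
  by subst k.
- move=> /andP[H1 H2]; rewrite hibfS lgfS.
  case: (ltnP i.+1 (2 ^ k)) => Hi.
  + case: k H1 H2 Hi => [|k] H1 H2 Hi; first by move: Hi; rewrite expn0.
    have Hk : i.+2 = 2 ^ k.+1 by lia.
    have [-> ->] : hibf i.+1 = 2 ^ k /\ lgf i.+1 = k.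
      by apply: IH; move: H1 H2 Hi Hk; rewrite !expnS; lia.
    by rewrite -expnS Hk eqxx addn1.
  + have [-> ->] := IH k (ltac:(lia)).
    by rewrite -expnS (_ : (i.+2 == 2 ^ k.+1) = false) ?addn0 //; apply/eqP; lia.
Qed.

Lemma hib_Nv s : hibf (Nv s) = 2 ^ size s.
Proof. by have [] := hib_lg (Nv_bounds s). Qed.
Lemma lg_Nv s : lgf (Nv s) = size s.
Proof. by have [] := hib_lg (Nv_bounds s). Qed.

Fixpoint spreadf (M i : nat) : nat :=
  match i with 0 => 0 | j.+1 => spreadf M j + odd (iter j half M) * (2 ^ j * 2 ^ j) end.

Lemma spread_step (b : bool) M i : spreadf (b + M.*2) i.+1 = b + 4 * spreadf M i.
Proof.
elim: i => [|i IH] /=; first by rewrite oddD odd_double addbF muln1; case: b.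
rewrite /= in IH; rewrite IH -iterS iterSr half_bit_double !expnS; lia.
Qed.

Definition Dblf N := 2 ^ lgf N * 2 ^ lgf N + 3 * spreadf N (lgf N).

Lemma Dbl_Nv z : Dblf (Nv z) = Nv (dbl z).
Proof.
rewrite /Dblf lg_Nv; elim/last_ind: z => [|z b IH] //.
rewrite Nv_rcons size_rcons spread_step dbl_rcons Nv_cat /= -IH.
rewrite /valb /= /bf; case: b => /=; rewrite !expnS; lia.
Qed.

Definition espf j e := ((4 * Dblf j.+1 + 1) * hibf e.+1 + (e.+1 - hibf e.+1)).-1.

Lemma esp_enc z y : espf (encode z) (encode y) = encode (spair z y).
Proof.
rewrite /espf !encodeS Dbl_Nv hib_Nv encodeE spairE catA Nv_cat (Nv_val y) addKn.
congr predn; congr (_ + _); rewrite Nv_cat /valb /= /bf; lia.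
Qed.

Definition chalf := CPrec CZero (Subc (CProj 0) (CProj 1)).
Lemma evhalf n : eval chalf [:: n] n./2.
Proof.
apply: (evprec (h := half)); first constructor.
move=> i _; have -> : i.+1./2 = i - i./2.
  by rewrite -uphalfE uphalf_half; have := odd_double_half i; rewrite -muln2; lia.
by apply: eSubc; exact: evP.
Qed.
Definition Half g := CComp chalf [:: g].
Lemma eHalf g v a : eval g v a -> eval (Half g) v a./2.
Proof. by move=> h; apply: ev1 h _; exact: evhalf. Qed.
Definition Odd g := Subc g (Mul (Half g) (cK 2)).
Lemma eOdd g v a : eval g v a -> eval (Odd g) v (odd a).
Proof.
move=> h; have := eSubc h (eMul (eHalf h) (eK 2 v)).
by have := odd_double_half a; rewrite -muln2 => H; rewrite (_ : a - a./2 * 2 = odd a) //; lia.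
Qed.
Definition citer := CPrec (CProj 0) (Half (CProj 1)).
Definition Iter g1 g2 := CComp citer [:: g1; g2].
Lemma eIter g1 g2 v i M : eval g1 v i -> eval g2 v M -> eval (Iter g1 g2) v (iter i half M).
Proof.
move=> h1 h2; apply: ev2 h1 h2 _.
apply: (evprec (h := fun i => iter i half M)); first exact: evP.
by move=> j _; apply: eHalf; exact: evP.
Qed.
Definition cpow2 := CPrec (cK 1) (Mul (CProj 1) (cK 2)).
Definition Pow2 g := CComp cpow2 [:: g].
Lemma ePow2 g v a : eval g v a -> eval (Pow2 g) v (2 ^ a).
Proof.
move=> h; apply: ev1 h _; apply: (evprec (h := fun i => 2 ^ i)); first exact: eK.
by move=> i _; rewrite expnS mulnC; apply: eMul; [exact: evP | exact: eK].
Qed.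
Definition chib := CPrec (cK 1) (Ifz (Dist (Suc (CProj 0)) (Mul (cK 2) (CProj 1))) (Mul (cK 2) (CProj 1)) (CProj 1)).
Definition Hib g := CComp chib [:: g].
Lemma eDist g1 g2 v a b : eval g1 v a -> eval g2 v b -> eval (Dist g1 g2) v (a - b + (b - a)).
Proof. by move=> h1 h2; apply: eAdd; apply: eSubc. Qed.
Lemma dist0 a b : (a - b + (b - a) == 0) = (a == b).
Proof. by rewrite addn_eq0 !subn_eq0 eqn_leq. Qed.
Lemma eHib g v a : eval g v a -> eval (Hib g) v (hibf a).
Proof.
move=> h; apply: ev1 h _; apply: (evprec (h := hibf)); first exact: eK.
move=> i _ /=.
have := eIfz (eDist (eSuc (eP 0 [:: i; hibf i])) (eMul (eK 2 _) (eP 1 [:: i; hibf i])))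
             (eMul (eK 2 _) (eP 1 [:: i; hibf i])) (eP 1 [:: i; hibf i]).
by rewrite /= dist0.
Qed.
Definition clg := CPrec CZero (Add (CProj 1) (Eqb (Suc (CProj 0)) (Mul (cK 2) (Hib (CProj 0))))).
Definition Lg g := CComp clg [:: g].
Lemma eLg g v a : eval g v a -> eval (Lg g) v (lgf a).
Proof.
move=> h; apply: ev1 h _; apply: (evprec (h := lgf)); first constructor.
move=> i _.
exact: (eAdd (eP 1 [:: i; lgf i]) (eEqb (eSuc (eP 0 [:: i; lgf i])) (eMul (eK 2 [:: i; lgf i]) (eHib (eP 0 [:: i; lgf i]))))).
Qed.
Definition cspread := CPrec CZero (Add (CProj 1) (Mul (Odd (Iter (CProj 0) (CProj 2)))
                         (Mul (Pow2 (CProj 0)) (Pow2 (CProj 0))))).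
Definition Spread gi gM := CComp cspread [:: gi; gM].
Lemma eSpread gi gM v i M : eval gi v i -> eval gM v M -> eval (Spread gi gM) v (spreadf M i).
Proof.
move=> h1 h2; apply: ev2 h1 h2 _; apply: (evprec (h := spreadf M)); first constructor.
move=> j _ /=; set w := [:: j; spreadf M j; M].
exact: (eAdd (eP 1 w) (eMul (eOdd (eIter (eP 0 w) (eP 2 w))) (eMul (ePow2 (eP 0 w)) (ePow2 (eP 0 w))))).
Qed.
Definition Dbl g := Add (Mul (Pow2 (Lg g)) (Pow2 (Lg g))) (Mul (cK 3) (Spread (Lg g) g)).
Lemma eDbl g v a : eval g v a -> eval (Dbl g) v (Dblf a).
Proof.
move=> h; exact: (eAdd (eMul (ePow2 (eLg h)) (ePow2 (eLg h))) (eMul (eK 3 v) (eSpread (eLg h) h))).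
Qed.
Definition Esp gj ge := Pred (Add (Mul (Add (Mul (cK 4) (Dbl (Suc gj))) (cK 1)) (Hib (Suc ge)))
                               (Subc (Suc ge) (Hib (Suc ge)))).
Lemma eEsp gj ge v j e : eval gj v j -> eval ge v e -> eval (Esp gj ge) v (espf j e).
Proof.
move=> h1 h2.
exact: (ePred (eAdd (eMul (eAdd (eMul (eK 4 v) (eDbl (eSuc h1))) (eK 1 v)) (eHib (eSuc h2)))
                   (eSubc (eSuc h2) (eHib (eSuc h2))))).
Qed.

Definition Tg (g : bstr -> bstr) (w : bstr) : option bstr :=
  match ClassicalEpsilon.excluded_middle_informative (exists a, w = g a) with
  | left H => Some (proj1_sig (ClassicalEpsilon.constructive_indefinite_description _ H))
  | right _ => None end.

Lemma Tg_some g (ginj : injective g) w t : Tg g w = Some t <-> w = g t.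
Proof.
rewrite /Tg; case: ClassicalEpsilon.excluded_middle_informative => [H|H].
- case: (ClassicalEpsilon.constructive_indefinite_description _ H) => a /= Ha.
  by split; [case=> <- | move=> Hw; congr Some; apply: ginj; rewrite -Ha].
- by split=> // Hw; case: H; exists t.
Qed.

Lemma evalF_det c v y y' : eval c v y -> eval c v y' -> y = y'.
Proof. by move=> H1 H2; apply: eval_det H1 _ H2. Qed.

Lemma parse_pcomp (g : bstr -> bstr) (ginj : injective g) (E : code -> code)
  (eE : forall h v a, eval h v (encode a) -> eval (E h) v (encode (g a))) :
  pcomputable (Tg g).
Proof.
exists (CMu (Dist (E (CProj 0)) (CProj 1))) => s n.
have eF : forall a, eval (Dist (E (CProj 0)) (CProj 1)) [:: encode a; encode s]
      (encode (g a) - encode s + (encode s - encode (g a))).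
  by move=> a; apply: eDist; [apply: eE; exact: eP | exact: eP].
split.
- move=> H; inversion H; subst.
  have [a Ha] := encode_surj n; subst n.
  have := evalF_det H1 (eF a) => /esym /eqP; rewrite dist0 => /eqP /encode_inj Hs.
  by exists a; split=> //; apply/(Tg_some ginj).
- case=> t [/(Tg_some ginj) Hs ->]; subst s.
  constructor; first by have := eF t; rewrite subnn.
  move=> m Hm; have [a Ha] := encode_surj m; subst m.
  have := eF a; case E1: (encode (g a) - encode (g t) + (encode (g t) - encode (g a))) => [|k] He.
  + move/eqP: E1; rewrite dist0 => /eqP /encode_inj /ginj Hat; subst a; by rewrite ltnn in Hm.
  + by exists k.
Qed.

Lemma g2_inj : injective (fun a => spair a [::]).
Proof. by move=> a b /spair_inj []. Qed.
Lemma g5_inj : injective (fun a => spair [::] a).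
Proof. by move=> a b /spair_inj []. Qed.

Lemma T2_pcomp : pcomputable (Tg (fun a => spair a [::])).
Proof.
apply: (parse_pcomp g2_inj (E := fun h => Esp h (cK 0))) => h v a Ha.
have := eEsp Ha (eK 0 v); by rewrite (_ : 0 = encode [::]) // esp_enc.
Qed.
Lemma T5_pcomp : pcomputable (Tg (fun a => spair [::] a)).
Proof.
apply: (parse_pcomp g5_inj (E := fun h => Esp (cK 0) h)) => h v a Ha.
have := eEsp (eK 0 v) Ha; by rewrite (_ : 0 = encode [::]) // esp_enc.
Qed.

Lemma Tid_pcomp : pcomputable (fun w => Some w).
Proof.
exists (CProj 0) => s n; split.
- by move=> H; inversion H; subst; exists s.
- by case=> t [[<-] ->]; constructor.
Qed.

Lemma Tcomp_pcomp (U f : bstr -> option bstr) : pcomputable U -> pcomputable f ->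
  pcomputable (fun w => match U w with Some u => f u | None => None end).
Proof.
move=> [cU HU] [cf Hf]; exists (CComp cf [:: cU]) => s n; split.
- move=> H; inversion H; subst.
  inversion H2; subst.
  have [u [Hu Hy]] := (HU s y) .1 H3; subst y.
  rewrite Hu; inversion H6; subst; exact: (Hf u n).1 H5.
- rewrite /=; case E: (U s) => [u|]; last by case=> t []. move=> Hn.
  have Hu := (HU s (encode u)) .2 (ex_intro _ u (conj E erefl)).
  apply: (@evComp _ _ _ [:: encode u]); first by constructor=> //; constructor.
  exact: (Hf u n).2 Hn.
Qed.

Definition Q (U : bstr -> option bstr) (x y : bstr) (k : nat) : Prop :=
  (exists z, 2 * size z <= k.+1 /\ U (spair z y) = Some x) \/
  (exists z, size z <= k /\ U (spair z [::]) = Some x).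

Lemma Q_mono U x y k k' : Q U x y k -> k <= k' -> Q U x y k'.
Proof.
move=> [[z [H1 H2]]|[z [H1 H2]]] Hk; [left|right]; exists z; split=> //; lia.
Qed.

Lemma min_exists (P : nat -> Prop) : (exists k, P k) -> exists k, P k /\ forall k', P k' -> k <= k'.
Proof.
move=> [k Hk]; elim: k {-2}k (leqnn k) Hk => [|n IH] k Hk HP.
- by exists k; split=> // k' _; move: Hk; rewrite leqn0 => /eqP ->.
- case: (Classical_Prop.classic (exists k', k' < k /\ P k')) => [[k' [Hk' HP']]|Hno].
  + by apply: (IH k') => //; lia.
  + exists k; split=> // k' HP'; rewrite leqNgt; apply/negP => Hlt; apply: Hno; by exists k'.
Qed.

Definition Bf U x y : nat :=
  ClassicalEpsilon.epsilon (inhabits 0) (fun k => Q U x y k /\ forall k', Q U x y k' -> k <= k').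

Lemma Bf_spec U x y : (exists k, Q U x y k) -> forall k, Bf U x y <= k <-> Q U x y k.
Proof.
move=> /min_exists Hex k.
have [HQ Hmin] := ClassicalEpsilon.epsilon_spec (inhabits 0) _ Hex.
rewrite -/(Bf U x y) in HQ Hmin; split.
- by move=> Hk; apply: Q_mono HQ Hk.
- exact: Hmin.
Qed.


Definition testf cU w ex ey k j : nat :=
  (2 * lgf j.+1 < k.+2) * (enc (run w cU [:: espf j ey]) == ex.+1) +
  (lgf j.+1 < k.+1) * (enc (run w cU [:: espf j 0]) == ex.+1).

Definition RunU cU g1 g2 := CComp (Sc cU 1) [:: g1; g2].
Lemma eRunU cU g1 g2 v w q : eval g1 v w -> eval g2 v q -> eval (RunU cU g1 g2) v (enc (run w cU [:: q])).
Proof. by move=> h1 h2; apply: ev2 h1 h2 _; exact: Sc_ok. Qed.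

Definition ctest cU :=
  Add (Mul (Ltb (Mul (cK 2) (Lg (Suc (CProj 0)))) (Suc (Suc (CProj 5))))
           (Eqb (RunU cU (CProj 2) (Esp (CProj 0) (CProj 4))) (Suc (CProj 3))))
      (Mul (Ltb (Lg (Suc (CProj 0))) (Suc (CProj 5)))
           (Eqb (RunU cU (CProj 2) (Esp (CProj 0) (cK 0))) (Suc (CProj 3)))).

Lemma etest cU j r w ex ey k : eval (ctest cU) [:: j; r; w; ex; ey; k] (testf cU w ex ey k j).
Proof.
set v := [:: j; r; w; ex; ey; k].
exact: (eAdd (eMul (eLtb (eMul (eK 2 v) (eLg (eSuc (eP 0 v)))) (eSuc (eSuc (eP 5 v))))
                   (eEqb (eRunU cU (eP 2 v) (eEsp (eP 0 v) (eP 4 v))) (eSuc (eP 3 v))))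
             (eMul (eLtb (eLg (eSuc (eP 0 v))) (eSuc (eP 5 v)))
                   (eEqb (eRunU cU (eP 2 v) (eEsp (eP 0 v) (eK 0 v))) (eSuc (eP 3 v))))).
Qed.

Definition BEf cU ex ey k w := has (fun j => testf cU w ex ey k j != 0) (iota 0 w).

Definition cBE cU := CComp (CPrec CZero (Sg (Add (CProj 1) (ctest cU))))
                           [:: CProj 0; CProj 0; CProj 1; CProj 2; CProj 3].

Lemma eBE cU w ex ey k : eval (cBE cU) [:: w; ex; ey; k] (BEf cU ex ey k w).
Proof.
apply: (@evComp _ _ _ [:: w; w; ex; ey; k]); first by repeat constructor.
apply: (evprec (h := fun i => (has (fun j => testf cU w ex ey k j != 0) (iota 0 i) : nat))).
  by constructor.
move=> i _; rewrite (_ : iota 0 i.+1 = iota 0 i ++ [:: i]); last by rewrite -addn1 iotaD.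
rewrite has_cat /= orbF.
have := eSg (eAdd (eP 1 [:: i; has (fun j => testf cU w ex ey k j != 0) (iota 0 i) : nat; w; ex; ey; k])
                  (etest cU i (has (fun j => testf cU w ex ey k j != 0) (iota 0 i)) w ex ey k)).
by case: (has _ _) => /=; rewrite ?addn_eq0 //.
Qed.

Definition cF cU := Ifz (cBE cU) (cK 1) (cK 0).
Definition Top cU := CMu (cF cU).

Lemma eF cU w ex ey k : eval (cF cU) [:: w; ex; ey; k] (if BEf cU ex ey k w then 0 else 1).
Proof. by have := eIfz (eBE cU w ex ey k) (eK 1 _) (eK 0 _); case: (BEf _ _ _ _ _). Qed.

Lemma Top_halts cU ex ey k :
  (exists n, eval (Top cU) [:: ex; ey; k] n) <-> exists w, BEf cU ex ey k w.
Proof.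
split.
- case=> n H; inversion H; subst; exists n.
  have := evalF_det H1 (eF cU n ex ey k); by case: (BEf _ _ _ _ _).
- move=> Hex; have [w Hw Hmin] := ex_minnP (ex_intro (fun w => BEf cU ex ey k w) _ (proj2_sig (ClassicalEpsilon.constructive_indefinite_description _ Hex))).
  exists w; constructor; first by have := eF cU w ex ey k; rewrite Hw.
  move=> m Hm; exists 0; have := eF cU m ex ey k.
  case E: (BEf _ _ _ _ m) => //; have := Hmin m E; by rewrite leqNgt Hm.
Qed.

Lemma lg_enc z : lgf (encode z).+1 = size z.
Proof. by rewrite encodeS lg_Nv. Qed.

Lemma enc_eq o n : (enc o == n.+1) = (o == Some n).
Proof. by case: o => [a|] //=; apply/eqP/eqP => [[->]|[->]]. Qed.

Lemma BE_Q U cU (HU : forall s n, eval cU [:: encode s] n <-> exists t, U s = Some t /\ n = encode t) x y k :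
  (exists w, BEf cU (encode x) (encode y) k w) <-> Q U x y k.
Proof.
have Hrun : forall w q, run w cU [:: encode q] = Some (encode x) -> U q = Some x.
  move=> w q /run_sound /HU [t [Ht /encode_inj Hx]]; by rewrite Ht Hx.
split.
- case=> w /hasP [j _]; have [z <-] := encode_surj j.
  rewrite /testf !lg_enc !enc_eq esp_enc (_ : 0 = encode [::]) // esp_enc.
  rewrite addn_eq0 !muln_eq0 !eqb0 negb_and !negb_or !negbK => /orP [/andP[h1 h2] | /andP[h1 h2]].
  + by left; exists z; split; [lia | apply: (Hrun w); apply/eqP].
  + by right; exists z; split; [lia | apply: (Hrun w); apply/eqP].
- have Hc : forall q, U q = Some x -> exists t, forall w, t <= w -> run w cU [:: encode q] = Some (encode x).
    move=> q Hq; have := (HU q (encode x)).2 (ex_intro _ x (conj Hq erefl)).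
    case/run_complete=> t Ht; exists t => w Hw; exact: run_mono Ht Hw.
  case=> [[z [Hz Hq]]|[z [Hz Hq]]]; have [t Ht] := Hc _ Hq;
    exists (maxn t (encode z).+1); apply/hasP; exists (encode z);
    (try by rewrite mem_iota add0n leq0n /= leq_maxr);
    rewrite /testf lg_enc !enc_eq ?esp_enc (_ : 0 = encode [::]) // esp_enc Ht ?leq_maxl ?eqxx //.
  + have -> : 2 * size z < k.+2 by lia. by [].
  + have -> : size z < k.+1 by lia. by rewrite addn_eq0 andbF.
Qed.

Lemma enc_lt z : encode z < 2 ^ (size z).+1.
Proof. have /andP[_ h] := Nv_bounds z; rewrite -encodeS in h; exact: ltnW. Qed.

Lemma enc_lt' z k : size z <= k -> encode z < 2 ^ k.+1.
Proof. move=> H; apply: leq_trans (enc_lt z) _; by rewrite leq_exp2l. Qed.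

Lemma dbl_neq a b : a.*2 <> b.*2.+1.
Proof. move=> H; have := congr1 odd H; by rewrite /= !odd_double. Qed.

Definition spec3 (U : bstr -> option bstr) (y : bstr) (n : nat) (x : bstr) (m : nat) :=
  (exists z, 2 * size z <= n.+1 /\ U (spair z y) = Some x /\ m = (encode z).*2) \/
  (exists z, size z <= n /\ U (spair z [::]) = Some x /\ m = (encode z).*2.+1).

Lemma spec3_ex U y n x : Q U x y n -> exists m, m < 2 ^ n.+2 /\ spec3 U y n x m.
Proof.
case=> [[z [Hz HU]]|[z [Hz HU]]].
- exists (encode z).*2; split; last by left; exists z.
  have : size z <= n by lia.
  move/enc_lt'; rewrite [2 ^ n.+2]expnS -muln2; lia.
- exists (encode z).*2.+1; split; last by right; exists z.
  move/enc_lt': Hz; rewrite [2 ^ n.+2]expnS -muln2; lia.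
Qed.

Lemma spec3_inj U y n x x' m : spec3 U y n x m -> spec3 U y n x' m -> x = x'.
Proof.
case=> [[z [_ [H1 ->]]]|[z [_ [H1 ->]]]] [[z' [_ [H2 E]]]|[z' [_ [H2 E]]]].
- move/double_inj/encode_inj: E => E; subst z'; by move: H1; rewrite H2 => [[]].
- by case: (dbl_neq E).
- by case: (dbl_neq (esym E)).
- case: E => /double_inj/encode_inj E; subst z'; by move: H1; rewrite H2 => [[]].
Qed.

Lemma count3 (U : bstr -> option bstr) y n (s : seq bstr) : uniq s -> (forall x, x \in s -> Q U x y n) -> size s <= 4 * 2 ^ n.
Proof.
move=> Hu Hall.
pose cn x := ClassicalEpsilon.epsilon (inhabits 0) (fun m => m < 2 ^ n.+2 /\ spec3 U y n x m).
have Hcn : forall x, x \in s -> cn x < 2 ^ n.+2 /\ spec3 U y n x (cn x).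
  move=> x Hx; exact: (ClassicalEpsilon.epsilon_spec (inhabits 0) (fun m => m < 2 ^ n.+2 /\ spec3 U y n x m) (spec3_ex (Hall x Hx))).
have Hinj : {in s &, injective cn}.
  move=> x x' Hx Hx' E; have [_ h1] := Hcn x Hx; have [_ h2] := Hcn x' Hx'.
  rewrite E in h1; exact: spec3_inj h1 h2.
have H := uniq_leq_size (s1 := map cn s) (s2 := iota 0 (2 ^ n.+2)).
rewrite map_inj_in_uniq // size_map size_iota in H.
rewrite (_ : 4 * 2 ^ n = 2 ^ n.+2); last by rewrite !expnS; lia.
apply: H => // m /mapP [x Hx ->]; rewrite mem_iota add0n leq0n /=; exact: (Hcn x Hx).1.
Qed.

Lemma decomp P a1 b1 a2 b2 : a1 < P -> a2 < P -> a1 + P * b1 = a2 + P * b2 -> a1 = a2 /\ b1 = b2.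
Proof.
move=> h1 h2 E.
have P0 : 0 < P by lia.
have d1 : (a1 + P * b1) %/ P = b1 by rewrite addnC mulnC divnMDl // divn_small // addn0.
have d2 : (a2 + P * b2) %/ P = b2 by rewrite addnC mulnC divnMDl // divn_small // addn0.
have eb : b1 = b2 by rewrite -d1 -d2 E.
by subst b2; split=> //; lia.
Qed.

Definition bad6 (U : bstr -> option bstr) K L cid (t : seq bool) :=
  (exists z', size z' <= K.+1 /\ U (spair z' (drop L t)) = Some (spair (take L t) (drop L t))) \/
  (exists z'', size z'' <= L + cid + K /\ U (spair z'' [::]) = Some (spair (take L t) (drop L t))).

Definition spec6 (U : bstr -> option bstr) K L cid (t : seq bool) (m : nat) :=
  (exists z', size z' <= K.+1 /\ U (spair z' (drop L t)) = Some (spair (take L t) (drop L t)) /\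
      m = (encode z' + 2 ^ K.+2 * encode (drop L t)).*2) \/
  (exists z'', size z'' <= L + cid + K /\ U (spair z'' [::]) = Some (spair (take L t) (drop L t)) /\
      m = (encode z'').*2.+1).

Lemma spec6_inj U K L cid t1 t2 m : size t1 = size t2 -> spec6 U K L cid t1 m -> spec6 U K L cid t2 m -> t1 = t2.
Proof.
move=> Hs.
have fin : spair (take L t1) (drop L t1) = spair (take L t2) (drop L t2) -> t1 = t2.
  by case/spair_inj => e1 e2; rewrite -(cat_take_drop L t1) -(cat_take_drop L t2) e1 e2.
case=> [[z [hz [H1 ->]]]|[z [hz [H1 ->]]]] [[z' [hz' [H2 E]]]|[z' [hz' [H2 E]]]].
- move/double_inj: E => E.
  have [ea eb] := decomp (enc_lt' hz) (enc_lt' hz') E.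
  move/encode_inj: ea => ea; move/encode_inj: eb => eb; subst z'.
  by apply: fin; move: H1; rewrite eb H2 => [[]].
- by case: (dbl_neq E).
- by case: (dbl_neq (esym E)).
- case: E => /double_inj/encode_inj E; subst z'; apply: fin; by move: H1; rewrite H2 => [[]].
Qed.

Lemma spec6_ex U K L cid (t : seq bool) : size t = L + (L + cid) -> L = K + 5 ->
  bad6 U K L cid t -> exists m, m < 2 ^ (K + (L + cid) + 4) /\ spec6 U K L cid t m.
Proof.
move=> Ht HL; have Hy : size (drop L t) = L + cid by rewrite size_drop Ht; lia.
case=> [[z [hz H]]|[z [hz H]]].
- exists (encode z + 2 ^ K.+2 * encode (drop L t)).*2; split; last by left; exists z.
  have a := enc_lt' hz; have b := enc_lt (drop L t); rewrite Hy in b.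
  have : encode z + 2 ^ K.+2 * encode (drop L t) < 2 ^ K.+2 * 2 ^ (L + cid).+1.
    apply: (leq_trans (n := 2 ^ K.+2 * (encode (drop L t)).+1)); first by rewrite mulnS; lia.
    by rewrite leq_mul2l b orbT.
  rewrite -expnD (_ : K + (L + cid) + 4 = (K.+2 + (L + cid).+1).+1); last by lia.
  rewrite (expnS 2 (K.+2 + (L + cid).+1)) -muln2; lia.
- exists (encode z).*2.+1; split; last by right; exists z.
  have a := enc_lt' hz.
  have : 2 ^ (L + cid + K).+1 <= 2 ^ (K + (L + cid) + 3) by rewrite leq_exp2l //; lia.
  rewrite (_ : K + (L + cid) + 4 = (K + (L + cid) + 3).+1); last by lia.
  rewrite (expnS 2 (K + (L + cid) + 3)) -muln2; lia.
Qed.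

Lemma part6 U (Hex : forall x y, exists k, Q U x y k) (cid : nat)
  (Hcid : forall x y z : bstr, Some (spair z y) = Some x ->
     exists z', U (spair z' y) = Some x /\ size z' <= size z + cid) K :
  exists x y m, isC U x y m /\ K < natdist (Bf U x y) m.
Proof.
pose L := K + 5.
case: (Classical_Prop.classic (exists t : (L + (L + cid)).-tuple bool, ~ bad6 U K L cid t)).
- case=> t Hgood.
  have Hsz : size (take L t) = L by rewrite size_takel // size_tuple leq_addr.
  have [z0 [Hz0 Hs0]] := Hcid (spair (take L t) (drop L t)) (drop L t) (take L t) erefl.
  have [m [[zm [Hzm Hsm]] Hmin]] := min_exists
     (ex_intro (fun m => exists z', U (spair z' (drop L t)) = Some (spair (take L t) (drop L t)) /\ size z' = m)
        _ (ex_intro _ z0 (conj Hz0 erefl))).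
  exists (spair (take L t) (drop L t)), (drop L t), m; split.
    by split; [exists zm | move=> z' Hz'; apply: Hmin; exists z'].
  have HQ := (Bf_spec (Hex (spair (take L t) (drop L t)) (drop L t)) _).1 (leqnn _).
  have Hm : m <= L + cid by have := Hmin _ (ex_intro _ z0 (conj Hz0 erefl)); lia.
  rewrite /natdist; suff: m + K < Bf U (spair (take L t) (drop L t)) (drop L t) by lia.
  rewrite ltnNge; apply/negP => Hb; apply: Hgood.
  case: HQ => [[z' [h1 h2]]|[z' [h1 h2]]]; [left|right]; exists z'; split=> //.
  + by have := Hmin (size z') (ex_intro _ z' (conj h2 erefl)); lia.
  + lia.
- move=> Hall.
  have Hb : forall t : (L + (L + cid)).-tuple bool, bad6 U K L cid t.
    by move=> t; apply: Classical_Prop.NNPP => H; apply: Hall; exists t.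
  pose M := 2 ^ (K + (L + cid) + 4).
  have Hf : forall t : (L + (L + cid)).-tuple bool, exists m, m < M /\ spec6 U K L cid t m.
    by move=> t; apply: spec6_ex (Hb t); rewrite ?size_tuple.
  pose fm (t : (L + (L + cid)).-tuple bool) :=
    ClassicalEpsilon.epsilon (inhabits 0) (fun m => m < M /\ spec6 U K L cid t m).
  have Hfm : forall t, fm t < M /\ spec6 U K L cid t (fm t).
    by move=> t; exact: (ClassicalEpsilon.epsilon_spec (inhabits 0) (fun m => m < M /\ spec6 U K L cid t m) (Hf t)).
  pose F t : 'I_M := Ordinal (Hfm t).1.
  have Finj : injective F.
    move=> t1 t2 /(congr1 val) /= E; apply: val_inj => /=.
    apply: (spec6_inj (m := fm t1)); first by rewrite !size_tuple.
    - exact: (Hfm t1).2.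
    - rewrite E; exact: (Hfm t2).2.
  have := leq_card F Finj; rewrite card_tuple card_bool card_ord /M leq_exp2l //; lia.
Qed.

Theorem theorem6 :
  forall U : bstr -> option bstr, machine U -> optimal U ->
  exists B : bstr -> bstr -> nat,
    (* (1) *) upper_semicomputable B /\
    (* (2) *) (exists c, forall x y, B x y <= size x + c) /\
    (* (3) *) (exists d, forall (y : bstr) (n : nat) (s : seq bstr),
                 uniq s -> all (fun x => B x y <= n) s -> size s <= d * 2 ^ n) /\
    (* (4) *) (forall f, pcomputable f -> exists cf, forall (y x fx : bstr),
                 f x = Some fx -> B fx y <= B x y + cf) /\
    (* (5) *) (exists e, forall x, B x x <= e) /\
    (* (6) *) (forall k, exists x y m, isC U x y m /\ k < natdist (B x y) m).
Proof.
move=> U HUm Hopt.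
have [cU HU] := HUm.
have [c2 H2] := Hopt _ T2_pcomp.
have [c5 H5] := Hopt _ T5_pcomp.
have [cid Hid] := Hopt _ Tid_pcomp.
have Hx2 : forall x, exists z', U (spair z' [::]) = Some x /\ size z' <= size x + c2.
  by move=> x; apply: (H2 x [::] x); apply/(Tg_some g2_inj).
have Hex : forall x y, exists k, Q U x y k.
  move=> x y; have [z' [h1 h2]] := Hx2 x; exists (size z'); right; by exists z'.
exists (Bf U); split; [|split; [|split; [|split; [|split]]]].
- exists (Top cU) => x y k; rewrite (Bf_spec (Hex x y)) Top_halts; exact: iff_sym (BE_Q HU x y k).
- exists c2 => x y; apply/(Bf_spec (Hex x y)); have [z' [h1 h2]] := Hx2 x; right; by exists z'.
- exists 4 => y n s Hu Hall; apply: (count3 (U := U) (y := y)) => // x Hx.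
  apply/(Bf_spec (Hex x y)); by move/allP: Hall; apply.
- move=> f Hf; have [cT HT] := Hopt _ (Tcomp_pcomp HUm Hf).
  exists (2 * cT) => y x fx Hfx.
  apply/(Bf_spec (Hex fx y)); have := (Bf_spec (Hex x y) (Bf U x y)).1 (leqnn _).
  case=> [[z [h1 h2]]|[z [h1 h2]]].
  + have [z' [h3 h4]] := HT fx y z (ltac:(by rewrite /= h2)).
    by left; exists z'; split=> //; lia.
  + have [z' [h3 h4]] := HT fx [::] z (ltac:(by rewrite /= h2)).
    by right; exists z'; split=> //; lia.
- exists (2 * c5) => x; apply/(Bf_spec (Hex x x)).
  have [z' [h1 h2]] := H5 x x [::] (ltac:(by apply/(Tg_some g5_inj))).
  by left; exists z'; split=> //; rewrite /= in h2; lia.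
- move=> K; exact: (@part6 U Hex cid Hid K).
Qed.
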